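(* Let $\Phi_1,\Phi_2$ be simple point processes on $\mathbb{R}^d$. If $\Phi_1$ has smaller void probabilities than $\Phi_2$, i.e. $\Pr\{\Phi_1(B)=0\}\le\Pr\{\Phi_2(B)=0\}$ for all bounded Borel $B$, then $\overline r_c(\Phi_1)\le\overline r_c(\Phi_2)$.
   Context: For $r>0$, $x\in\mathbb{R}^d$, let $Q^r=(-\frac{1}{2r},\frac{1}{2r}]^d$ and $Q^r(x)=x+Q^r$. For $n\in\mathbb{N}$, $\mathbb{L}^{*d}_n$ is the graph with vertex set $\mathbb{Z}^d_n=\frac1n\mathbb{Z}^d$ and edges $\langle z_i,z_j\rangle$ whenever $Q^{n/2}(z_i)\cap Q^{n/2}(z_j)\ne\emptyset$. A contour is a minimal collection of vertices of $\mathbb{L}^{*d}_n$ such that every infinite path in $\mathbb{L}^{*d}_n$ from the origin contains one of these vertices (minimal: removing any vertex yields an infinite path from the origin avoiding the remaining ones). $\Gamma_n$ is the set of all contours around the origin in $\mathbb{L}^{*d}_n$, and for $\gamma\subset\mathbb{R}^d$, $Q_\gamma=\bigcup_{z\in\gamma}Q^n(z)$. For a point process $\Phi$, $C(\Phi,r)=\bigcup_{X\in\Phi}B_X(r)$, and $\overline r_c(\Phi)=\inf\{r>0:\text{for all }n\ge1,\ \sum_{\gamma\in\Gamma_n}\Pr\{C(\Phi,r)\cap Q_\gamma=\emptyset\}<\infty\}$. *)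

(* Defs.v *)
From HB Require Import structures.
From mathcomp Require Import all_boot all_order all_algebra.
From mathcomp Require Import all_classical all_reals all_analysis measurable_realfun.
Set Implicit Arguments. Unset Strict Implicit. Unset Printing Implicit Defensive.
Import Order.TTheory GRing.Theory Num.Theory.
Import numFieldNormedType.Exports.
Local Open Scope classical_set_scope.
Local Open Scope ring_scope.

Section Defs.
Context {R : realType} {d : nat}.

Definition Rpt := 'rV[R]_d.

Definition edist (x y : Rpt) : R :=
  Num.sqrt (\sum_(i < d) (x ord0 i - y ord0 i) ^+ 2).

Definition ebounded (B : set Rpt) : Prop :=
  exists M : R, forall x, B x -> edist 0 x <= M.

Definition borel_Rd (B : set Rpt) : Prop := <<s [set U : set Rpt | open U] >> B.

Definition cube (r : R) (x : Rpt) : set Rpt :=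
  [set y | forall i : 'I_d,
     - (1 / (2 * r)) < y ord0 i - x ord0 i /\ y ord0 i - x ord0 i <= 1 / (2 * r)].

Definition eball (X : Rpt) (r : R) : set Rpt := [set y | edist X y <= r].

Definition cover (Phi : set Rpt) (r : R) : set Rpt :=
  \bigcup_(X in Phi) eball X r.

Definition npoints (Phi : set Rpt) (B : set Rpt) : \bar R :=
  (\esum_(x in Phi `&` B) 1)%E.

(* the lattice L*_n^d; vertex k in Z^d represents the Rpt k/n of Z^d_n *)
Definition vtx (n : nat) (k : 'rV[int]_d) : Rpt :=
  \row_i ((k ord0 i)%:~R / n%:R).

Definition ladj (n : nat) (k l : 'rV[int]_d) : Prop :=
  k <> l /\ (cube (n%:R / 2) (vtx n k) `&` cube (n%:R / 2) (vtx n l)) !=set0.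

Definition inf_path (n : nat) (p : nat -> 'rV[int]_d) : Prop :=
  p 0%N = 0 /\ injective p /\ forall m, ladj n (p m) (p m.+1).

Definition blocks (n : nat) (g : set 'rV[int]_d) : Prop :=
  forall p, inf_path n p -> exists m, g (p m).

(* contour around the origin: minimal blocking set; Gamma_n = contour n *)
Definition contour (n : nat) (g : set 'rV[int]_d) : Prop :=
  blocks n g /\ forall v, g v -> ~ blocks n (g `\ v).

Definition Qgamma (n : nat) (g : set 'rV[int]_d) : set Rpt :=
  \bigcup_(k in g) cube n%:R (vtx n k).

Definition simple_point_process {d0} {Omega : measurableType d0}
    (Phi : Omega -> set Rpt) : Prop :=
  (forall w B, ebounded B -> finite_set (Phi w `&` B)) /\
  (forall B, borel_Rd B -> ebounded B ->
     measurable_fun [set: Omega] (fun w => npoints (Phi w) B)).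

Definition rc_bar {d0} {Omega : measurableType d0} (P : probability Omega R)
    (Phi : Omega -> set Rpt) : \bar R :=
  ereal_inf [set r%:E | r in [set r : R | 0 < r /\
     forall n : nat, (1 <= n)%N ->
       (\esum_(g in contour n) P [set w | cover (Phi w) r `&` Qgamma n g = set0] < +oo)%E]].

End Defs.

(* Main.v *)
Require Import Defs.
From HB Require Import structures.
From mathcomp Require Import all_boot all_order all_algebra.
From mathcomp Require Import all_classical all_reals all_analysis measurable_realfun.
From mathcomp Require Import lra.
Import Order.TTheory GRing.Theory Num.Theory.
Import numFieldNormedType.Exports.
Local Open Scope classical_set_scope.
Local Open Scope ring_scope.
Set Implicit Arguments. Unset Strict Implicit. Unset Printing Implicit Defensive.
Section S.
Context {R : realType} {d : nat}.
Local Notation P := (@Rpt R d).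

Definition dint (l u t : R) : R := Num.max (l - t) (Num.max 0 (t - u)).

Lemma dint_ge0 l u t : 0 <= dint l u t.
Proof. by rewrite /dint le_max le_max lexx orbT. Qed.

Lemma dint_le l u t z : l <= z -> z <= u -> dint l u t <= `|t - z|.
Proof.
move=> hl hu; rewrite /dint !ge_max normr_ge0 /=.
case: (lerP 0 (t - z)) => h; [rewrite ger0_norm // | rewrite ltr0_norm //]; apply/andP; split; lra.
Qed.

Lemma dint_clamp l u t : l <= u -> exists z, [/\ l <= z, z <= u & `|t - z| = dint l u t].
Proof.
move=> hlu; exists (Num.min (Num.max t l) u); rewrite /dint.
case: (lerP t l) => htl.
  rewrite (min_l hlu) lexx hlu; split => //.
  rewrite ler0_norm; last lra.
  rewrite (@max_l _ _ (l - t) (Num.max 0 (t - u))); first lra.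
  rewrite ge_max; apply/andP; split; lra.
case: (lerP t u) => htu.
  rewrite (ltW htl) htu subrr normr0; split => //.
  rewrite (@max_l _ _ 0 (t - u)); last lra.
  rewrite max_r //; lra.
rewrite lexx hlu; split => //.
rewrite ger0_norm; last lra.
rewrite (@max_r _ _ 0 (t - u)); last lra.
rewrite max_r //; lra.
Qed.

Lemma sq_le (a b : R) : 0 <= a -> a <= `|b| -> a ^+ 2 <= b ^+ 2.
Proof.
move=> a0 ab; rewrite -(real_normK (num_real b)).
by rewrite ler_pXn2r // ?nnegrE // (le_trans a0 ab).
Qed.

Definition fdist (l u : 'I_d -> R) (y : P) : R :=
  Num.sqrt (\sum_(i < d) (dint (l i) (u i) (y ord0 i)) ^+ 2).

Lemma box_thick (l u : 'I_d -> R) (r : R) (y : P) : (forall i, l i <= u i) ->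
  ((exists z : P, (forall i, l i <= z ord0 i /\ z ord0 i <= u i) /\ Defs.edist y z <= r)
   <-> fdist l u y <= r).
Proof.
move=> hlu; split.
  move=> [z [hz hr]]; apply: le_trans hr; rewrite /fdist /Defs.edist.
  rewrite ler_sqrt; last by apply: sumr_ge0 => i _; exact: sqr_ge0.
  apply: ler_sum => i _; apply: sq_le; first exact: dint_ge0.
  by have [? ?] := hz i; exact: dint_le.
move=> hr.
have hc i := dint_clamp (y ord0 i) (hlu i).
pose z : P := \row_i (projT1 (cid (hc i))).
exists z; split.
  by move=> i; rewrite mxE; case: (cid (hc i)) => /= w [].
apply: le_trans hr; rewrite /fdist /Defs.edist le_eqVlt; apply/orP; left; apply/eqP.
congr Num.sqrt; apply: eq_bigr => i _; rewrite mxE.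
case: (cid (hc i)) => /= w [_ _ <-].
by rewrite -(real_normK (num_real (y ord0 i - w))).
Qed.
Lemma open_borel (U : set P) : open U -> borel_Rd U.
Proof. by move=> oU; apply: sub_sigma_algebra. Qed.

Lemma closed_borel (U : set P) : closed U -> borel_Rd U.
Proof.
move=> cU; rewrite -(setCK U) -setTD; apply: sigma_algebraCD; apply: open_borel.
by rewrite openC.
Qed.
Lemma borel_bigcup (F : (set P)^nat) : (forall i, borel_Rd (F i)) -> borel_Rd (\bigcup_i F i).
Proof. exact: sigma_algebra_bigcup. Qed.
Lemma borel_setI (A B : set P) : borel_Rd A -> borel_Rd B -> borel_Rd (A `&` B).
Proof.
move=> hA hB; rewrite -(setCK (A `&` B)) setCI.
rewrite -setTD; apply: sigma_algebraCD.
rewrite -bigcup2E; apply: borel_bigcup => -[|[|i]] /=; rewrite -?setTD; try apply: sigma_algebraCD => //.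
exact: sigma_algebra0.
Qed.

Lemma cont_sumF (F : 'I_d -> R -> R) : (forall i, continuous (F i)) ->
  continuous (fun y : P => Num.sqrt (\sum_(i < d) F i (y ord0 i))).
Proof.
move=> hF y.
apply: (@continuous_comp _ _ _ (fun y : P => \sum_(i < d) F i (y ord0 i)) Num.sqrt);
  last exact: sqrt_continuous.
have : forall s : seq 'I_d, continuous (fun y : P => \sum_(i <- s) F i (y ord0 i)).
  elim => [|a s IH].
    have -> : (fun y : P => \sum_(i <- [::]) F i (y ord0 i)) = fun=> 0.
      by apply/funext => z; rewrite big_nil.
    exact: cst_continuous.
  have -> : (fun y : P => \sum_(i <- a :: s) F i (y ord0 i)) =
     (fun y : P => F a (y ord0 a) + \sum_(i <- s) F i (y ord0 i)).
    by apply/funext => z; rewrite big_cons.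
  move=> z.
  have h1 : {for z, continuous (fun y : P => F a (y ord0 a))}.
    exact: (@continuous_comp P R R (fun y : P => y ord0 a) (F a) z (@coord_continuous R 1 d ord0 a z) (hF a _)).
  exact: (continuousD h1 (IH z)).
by move=> h; exact: h.
Qed.

Lemma borel_le (f : P -> R) (c : R) : continuous f -> borel_Rd [set y | f y <= c].
Proof.
move=> hf.
have -> : [set y | f y <= c] = setT `\` (f @^-1` [set x | c < x]).
  apply/seteqP; split => y /=.
    by move=> h; split => //; apply/negP; rewrite -leNgt.
  by case => _ /negP; rewrite -leNgt.
apply: sigma_algebraCD; apply: open_borel; apply: open_comp; last exact: open_gt.
by move=> x _; exact: hf.
Qed.

Lemma dint_cont l u : continuous (dint l u).
Proof.
move=> t.
have hB : forall c : R, {for t, continuous (fun s : R => c - s)}.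
  move=> c; apply: (@continuousB _ _ _ (fun=> c) id); [exact: cst_continuous | by []].
have hB' : forall c : R, {for t, continuous (fun s : R => s - c)}.
  move=> c; apply: (@continuousB _ _ _ id (fun=> c)); [by [] | exact: cst_continuous].
have h2 : {for t, continuous (fun s : R => Num.max 0 (s - u))}.
  have := @continuous_max R R (fun=> 0) (fun s => s - u) t.
  apply; last exact: hB'.
  exact: cst_continuous.
have := @continuous_max R R (fun s => l - s) (fun s => Num.max 0 (s - u)) t.
by apply => //; exact: hB.
Qed.

Definition lo (r0 : R) (x : P) (m : nat) (i : 'I_d) : R :=
  x ord0 i - 1 / (2 * r0) + (1 / (2 * r0)) / (m.+1)%:R.
Definition hi (r0 : R) (x : P) (i : 'I_d) : R := x ord0 i + 1 / (2 * r0).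

Lemma lo_hi r0 x m i : 0 < r0 -> lo r0 x m i <= hi r0 x i.
Proof.
move=> r0p; rewrite /lo /hi; set h := 1 / (2 * r0).
have hp : 0 < h by rewrite /h divr_gt0 // mulr_gt0.
have : h / (m.+1)%:R <= h.
  rewrite ler_pdivrMr ?ltr0Sn //; rewrite -[X in X <= _]mulr1 ler_pM2l //.
  by rewrite ler1n.
move=> H; set q := h / _ in H *; clearbody q h; lra.
Qed.

Lemma cube_union r0 x y : 0 < r0 ->
  cube r0 x y <-> exists m : nat, forall i, lo r0 x m i <= y ord0 i /\ y ord0 i <= hi r0 x i.
Proof.
move=> r0p; rewrite /cube /lo /hi; set h := 1 / (2 * r0).
have hp : 0 < h by rewrite /h divr_gt0 // mulr_gt0.
split; last first.
  move=> [m hm] i.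
  have : 0 < h / (m.+1)%:R by rewrite divr_gt0 // ltr0Sn.
  move: (hm i); set q := h / _; clearbody q h => -[h1 h2] H; split; lra.
move=> hc; clearbody h.
pose e i := y ord0 i - x ord0 i + h.
have ep : forall i, 0 < e i by move=> i; have [? ?] := hc i; rewrite /e; lra.
set M := (\max_(i < d) Num.truncn (h / e i))%N.
have hM : forall i, (Num.truncn (h / e i) <= M)%N.
  by move=> i; rewrite /M; apply: (@leq_bigmax _ (fun j : 'I_d => Num.truncn (h / e j)) i).
exists M => i.
have [c1 c2] := hc i; split; last lra.
suff H : h / M.+1%:R <= e i.
  by move: H c1; rewrite /e; set q := h / M.+1%:R; clearbody q; lra.
rewrite ler_pdivrMr ?ltr0Sn //.
have hq : h / e i < (Num.truncn (h / e i)).+1%:R by exact: truncnS_gt.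
have hM' : (Num.truncn (h / e i)).+1%:R <= M.+1%:R :> R.
  by rewrite ler_nat ltnS hM.
have he : h / e i * e i = h by rewrite divfK // gt_eqF // ep.
move: hq hM' he; set q := h / e i; set a := _.+1%:R; set b := M.+1%:R.
clearbody q a b; move=> hq hM' he.
have := ep i; nra.
Qed.

Definition thick (A : set P) (r : R) : set P :=
  [set y | exists z, A z /\ Defs.edist y z <= r].

Lemma thick_cube_borel r0 x r : 0 < r0 -> borel_Rd (thick (Defs.cube r0 x) r).
Proof.
move=> r0p.
have -> : thick (Defs.cube r0 x) r = \bigcup_m [set y | fdist (lo r0 x m) (hi r0 x) y <= r].
  apply/seteqP; split.
    move=> y [z [cz hz]]; have [m hm] := (cube_union x z r0p).1 cz.
    exists m => //; apply/(box_thick r y (fun i => lo_hi x m i r0p)).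
    by exists z; split.
  move=> y [m _ hy]; have [z [hz hd]] := (box_thick r y (fun i => lo_hi x m i r0p)).2 hy.
  by exists z; split => //; apply: (cube_union x z r0p).2; exists m.
apply: borel_bigcup => m; apply: borel_le; rewrite /fdist.
apply: (@cont_sumF (fun i t => dint (lo r0 x m i) (hi r0 x i) t ^+ 2)) => i t.
have := @continuous_comp R R R (dint (lo r0 x m i) (hi r0 x i)) (fun s => s ^+ 2) t (@dint_cont _ _ t) (@exprn_continuous R 2 _).
by [].
Qed.

Lemma thickQ_borel n g r : (0 < n)%N -> borel_Rd (thick (Qgamma n g) r).
Proof.
move=> n0.
have r0p : 0 < n%:R :> R by rewrite ltr0n.
pose F j := match @unpickle 'rV[int]_d j with
  | Some k => if pselect (g k) then thick (Defs.cube n%:R (vtx n k)) r else set0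
  | None => set0 end.
have -> : thick (Qgamma n g) r = \bigcup_j F j.
  apply/seteqP; split.
    move=> y [z [[k gk ck] hz]]; exists (pickle k) => //.
    rewrite /F pickleK; destruct (pselect (g k)) as [gk2|ng]; last by [].
    by exists z.
  move=> y [j _]; rewrite /F; case: unpickle => // k; destruct (pselect (g k)) as [gk|]; last by [].
  by move=> [z [cz hz]]; exists z; split => //; exists k.
apply: borel_bigcup => j; rewrite /F; case: unpickle => [k|]; last exact: sigma_algebra0.
destruct (pselect (g k)); last exact: sigma_algebra0.
exact: thick_cube_borel.
Qed.

Lemma npoints0 (X B : set P) : npoints X B = 0%E <-> X `&` B = set0.
Proof.
split; last by rewrite /npoints => ->; rewrite esum_set0.
move=> H; apply/seteqP; split => // x Hx; exfalso.
have : (1 <= npoints X B)%E.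
  apply: esum_ge; exists [set x]; first by split; [exact: finite_set1| move=> y ->].
  by rewrite fsbig_set1.
by rewrite H lee_fin ler10.
Qed.

Lemma event_eq (X : set P) n g r :
  (Defs.cover X r `&` Qgamma n g = set0) <-> npoints X (thick (Qgamma n g) r) = 0%E.
Proof.
rewrite npoints0; split => H; apply/seteqP; split => // y.
  move=> [Xy [z [qz hz]]]; have : (Defs.cover X r `&` Qgamma n g) z.
    by split => //; exists y.
  by rewrite H.
move=> [[x Xx hx] qy]; have : (X `&` thick (Qgamma n g) r) x.
  by split => //; exists y.
by rewrite H.
Qed.

Definition eball0 (m : nat) : set P := [set y | Defs.edist 0 y <= m%:R].

Lemma eball0_borel m : borel_Rd (eball0 m).
Proof.
apply: borel_le.
have -> : @Defs.edist R d 0 = (fun y : P => Num.sqrt (\sum_(i < d) (fun _ t => t ^+ 2) i (y ord0 i))).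
  apply/funext => y; rewrite /Defs.edist; congr Num.sqrt; apply: eq_bigr => i _.
  by rewrite mxE sub0r sqrrN.
exact: (@cont_sumF (fun _ t => t ^+ 2) (fun i => @exprn_continuous R 2)).
Qed.

Lemma npoints_cvg (d0 : measure_display) (Omega : measurableType d0) (Pr : probability Omega R)
  (Phi : Omega -> set P) (B : set P) : simple_point_process Phi -> borel_Rd B ->
  (fun m => Pr [set w | npoints (Phi w) (B `&` eball0 m) = 0%E]) @ \oo -->
  Pr [set w | npoints (Phi w) B = 0%E].
Proof.
move=> [_ hm] hB.
have mA : forall m, measurable [set w | npoints (Phi w) (B `&` eball0 m) = 0%E].
  move=> m.
  have hb : ebounded (B `&` eball0 m) by exists m%:R => x [].
  have := hm _ (borel_setI hB (eball0_borel m)) hb measurableT [set 0%E] (emeasurable_set1 0%E).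
  by rewrite setTI.
have capE : \bigcap_m [set w | npoints (Phi w) (B `&` eball0 m) = 0%E] =
            [set w | npoints (Phi w) B = 0%E].
  apply/seteqP; split => w /=.
    move=> H; apply/npoints0; apply/seteqP; split => // y [Xy By].
    set m := (Num.truncn (Defs.edist 0 y)).+1.
    have := H m I; move/npoints0 => H0.
    have : (Phi w `&` (B `&` eball0 m)) y.
      by split => //; split => //; rewrite /eball0 /=; apply: ltW; exact: truncnS_gt.
    by rewrite H0.
  move/npoints0 => H0 m _; apply/npoints0; apply/seteqP; split => // y [Xy [By _]].
  have : (Phi w `&` B) y by [].
  by rewrite H0.
rewrite -capE; apply: nonincreasing_cvg_mu.
- by apply: (le_lt_trans (probability_le1 Pr (mA 0%N))); exact: ltey.
- exact: mA.
- exact: bigcapT_measurable.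
- move=> m1 m2 hmn; rewrite subsetEset => w /=; move/npoints0 => H0; apply/npoints0; apply/seteqP; split => // y [Xy [By bm]].
  have : (Phi w `&` (B `&` eball0 m2)) y.
    split => //; split => //; apply: (le_trans bm); by rewrite ler_nat.
  by rewrite H0.
Qed.
End S.

Theorem corollary6p2 (R : realType) (d : nat)
  (d1 : measure_display) (Omega1 : measurableType d1) (P1 : probability Omega1 R)
  (d2 : measure_display) (Omega2 : measurableType d2) (P2 : probability Omega2 R)
  (Phi1 : Omega1 -> set (@Rpt R d)) (Phi2 : Omega2 -> set (@Rpt R d)) :
  simple_point_process Phi1 -> simple_point_process Phi2 ->
  (forall B : set (@Rpt R d), borel_Rd B -> ebounded B ->
     (P1 [set w | npoints (Phi1 w) B = 0%E] <= P2 [set w | npoints (Phi2 w) B = 0%E])%E) ->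
  (rc_bar P1 Phi1 <= rc_bar P2 Phi2)%E.
Proof.
move=> h1 h2 hv.
have ext : forall B, borel_Rd B ->
    (P1 [set w | npoints (Phi1 w) B = 0%E] <= P2 [set w | npoints (Phi2 w) B = 0%E])%E.
  move=> B hB; apply: (lee_cvg_to (npoints_cvg (Pr:=P1) h1 hB) (npoints_cvg (Pr:=P2) h2 hB)).
  apply: nearW => m; apply: hv; first exact: (borel_setI hB (eball0_borel m)).
  by exists m%:R => x [].
rewrite /rc_bar; apply: ereal_inf_le_tmp => _ [r [r0 hr] <-]; exists r => //; split => // n n1.
apply: le_lt_trans (hr n n1); apply: le_esum => g _.
have e1 : [set w | Defs.cover (Phi1 w) r `&` Qgamma n g = set0] =
          [set w | npoints (Phi1 w) (thick (Qgamma n g) r) = 0%E].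
  by apply/seteqP; split => w /event_eq.
have e2 : [set w | Defs.cover (Phi2 w) r `&` Qgamma n g = set0] =
          [set w | npoints (Phi2 w) (thick (Qgamma n g) r) = 0%E].
  by apply/seteqP; split => w /event_eq.
rewrite e1 e2; apply: ext; exact: thickQ_borel.
Qed.
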